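(* Fix finite nonempty $A$, $\Omega$, a full-support prior $\mu_0$ on $\Omega$, a finite $M$ with $|M|>\max\{|\Omega|,|A|\}$, and a strictly supermodular $u_S:A\times\Omega\to\mathbb R$. There is a set of Receiver preferences $u_R:A\times\Omega\to[0,1]$ of Lebesgue measure one in $[0,1]^{|A||\Omega|}$ such that, for every $u_R$ in it, if Sender values committing to a curve, then curve-committed Sender values randomization.
   Context: Messaging strategies $\sigma:\Omega\to\Delta M$, action strategies $\rho:M\to\Delta A$, $U_i(\sigma,\rho)=\sum_{\omega,m,a}\mu_0(\omega)\sigma(m|\omega)\rho(a|m)u_i(a,\omega)$. $(\sigma,\rho)$ is S-BR if $\sigma\in\arg\max_{\sigma'}U_S(\sigma',\rho)$ and R-BR if $\rho\in\arg\max_{\rho'}U_R(\sigma,\rho')$; a cheap-talk equilibrium is both, and the cheap-talk payoff is the max of $U_S$ over cheap-talk equilibria. For $\sigma$, let $D(\sigma)=\{\sigma':\sum_\omega\mu_0(\omega)\sigma'(m|\omega)=\sum_\omega\mu_0(\omega)\sigma(m|\omega)\ \forall m\}$. A profile $(\sigma^*,\rho^* )$ is a curve equilibrium if $\sigma^*\in\arg\max_{\sigma\in D(\sigma^* )}U_S(\sigma,\rho^* )$ and $\rho^*\in\arg\max_\rho U_R(\sigma^*,\rho)$. The curve payoff is the max of $U_S$ over curve equilibria; the curve partitional payoff is the max over curve equilibria with partitional $\sigma$ ($\sigma$ is partitional if for every $\omega$ some $m$ has $\sigma(m|\omega)=1$). Sender values committing to a curve if the curve payoff strictly exceeds the cheap-talk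 payoff; curve-committed Sender values randomization if the curve payoff strictly exceeds the curve partitional payoff. $u_S$ is strictly supermodular if there are total orders on $A$ and on $\Omega$ such that for $a'>a$ and $\omega'>\omega$, $u_S(a',\omega')-u_S(a,\omega')>u_S(a',\omega)-u_S(a,\omega)$. *)

(* Defs.v *)
From HB Require Import structures.
From mathcomp Require Import all_boot all_order all_algebra.
From mathcomp Require Import all_classical all_reals.
Set Implicit Arguments. Unset Strict Implicit. Unset Printing Implicit Defensive.
Import Order.TTheory GRing.Theory Num.Theory.
Local Open Scope ring_scope.
Local Open Scope classical_set_scope.

Section Game.
Variables (R : realType) (A Om M : finType).

Definition is_dist (T : finType) (p : T -> R) : Prop :=
  (forall t, 0 <= p t) /\ \sum_(t : T) p t = 1.

(* messaging strategy sigma : Omega -> Delta M, written sigma w m = sigma(m|w) *)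
Definition msg_strat (s : Om -> M -> R) : Prop := forall w, is_dist (s w).
(* action strategy rho : M -> Delta A, written rho m a = rho(a|m) *)
Definition act_strat (r : M -> A -> R) : Prop := forall m, is_dist (r m).

Variable mu0 : Om -> R.

Definition U (u : A -> Om -> R) (s : Om -> M -> R) (r : M -> A -> R) : R :=
  \sum_(w : Om) \sum_(m : M) \sum_(a : A) mu0 w * s w m * r m a * u a w.

Variables (uS uR : A -> Om -> R).

Definition S_BR s r : Prop :=
  forall s', msg_strat s' -> U uS s' r <= U uS s r.
Definition R_BR s r : Prop :=
  forall r', act_strat r' -> U uR s r' <= U uR s r.

Definition cheap_talk_eq s r : Prop :=
  msg_strat s /\ act_strat r /\ S_BR s r /\ R_BR s r.

Definition same_marginal (s s' : Om -> M -> R) : Prop :=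
  forall m, \sum_(w : Om) mu0 w * s' w m = \sum_(w : Om) mu0 w * s w m.

Definition curve_eq s r : Prop :=
  msg_strat s /\ act_strat r /\
  (forall s', msg_strat s' -> same_marginal s s' -> U uS s' r <= U uS s r) /\
  R_BR s r.

Definition partitional (s : Om -> M -> R) : Prop :=
  forall w, exists m, s w m = 1.

(* payoffs: the (attained) maximum of U_S over the equilibrium set, via sup *)
Definition cheap_talk_payoff : R :=
  sup [set x | exists s r, cheap_talk_eq s r /\ x = U uS s r].
Definition curve_payoff : R :=
  sup [set x | exists s r, curve_eq s r /\ x = U uS s r].
Definition curve_partitional_payoff : R :=
  sup [set x | exists s r, (curve_eq s r /\ partitional s) /\ x = U uS s r].

Definition values_committing : Prop := cheap_talk_payoff < curve_payoff.
Definition values_randomization : Prop := curve_partitional_payoff < curve_payoff.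

End Game.

Definition strict_total_order (T : eqType) (lt : rel T) : Prop :=
  (forall x, ~~ lt x x) /\
  (forall x y z, lt x y -> lt y z -> lt x z) /\
  (forall x y, x != y -> lt x y || lt y x).

Definition strictly_supermodular (R : realType) (A Om : finType)
    (uS : A -> Om -> R) : Prop :=
  exists (ltA : rel A) (ltO : rel Om),
    strict_total_order ltA /\ strict_total_order ltO /\
    forall a a' w w', ltA a a' -> ltO w w' ->
      uS a' w - uS a w < uS a' w' - uS a w'.

Definition unit_cube (R : realType) (A Om : finType) : set (A -> Om -> R) :=
  [set u | forall a w, 0 <= u a w <= 1].

Definition box_vol (R : realType) (A Om : finType) (lo hi : A -> Om -> R) : R :=
  \prod_(a : A) \prod_(w : Om) (hi a w - lo a w).

Definition lebesgue_null (R : realType) (A Om : finType)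
    (N : set (A -> Om -> R)) : Prop :=
  forall eps : R, 0 < eps ->
    exists (lo hi : nat -> A -> Om -> R),
      (forall k a w, lo k a w <= hi k a w) /\
      (N `<=` \bigcup_k [set u | forall a w, lo k a w <= u a w <= hi k a w]) /\
      (forall n, \sum_(k < n) box_vol (lo k) (hi k) <= eps).

Definition full_measure_in_cube (R : realType) (A Om : finType)
    (S : set (A -> Om -> R)) : Prop :=
  S `<=` @unit_cube R A Om /\ lebesgue_null (@unit_cube R A Om `\` S).

(* Main.v *)
Require Import Defs.
From HB Require Import structures.
From mathcomp Require Import all_boot all_order all_algebra.
From mathcomp Require Import all_classical all_reals.
From mathcomp Require Import ring lra.
Set Implicit Arguments. Unset Strict Implicit. Unset Printing Implicit Defensive.
Import Order.TTheory GRing.Theory Num.Theory.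
Local Open Scope ring_scope.
Local Open Scope classical_set_scope.

Section Basics.
Variable R : realType.

Lemma sum_ind (T : finType) (t0 : T) (F : T -> R) :
  \sum_(t : T) (t == t0)%:R * F t = F t0.
Proof.
rewrite (bigD1 t0) //= eqxx mul1r big1 ?addr0 // => t /negbTE ->.
by rewrite mul0r.
Qed.

Lemma sum_ind1 (T : finType) (t0 : T) : \sum_(t : T) ((t == t0)%:R : R) = 1.
Proof.
transitivity (\sum_(t : T) (t == t0)%:R * (1:R)).
  by apply: eq_bigr => t _; rewrite mulr1.
exact: sum_ind.
Qed.

Lemma exists_max (T : finType) (lt : rel T) : strict_total_order lt ->
  forall (P : pred T) x, P x -> exists y, P y /\ forall z, P z -> ~~ lt y z.
Proof.
move=> [irr [tr _]] P.
suff H : forall n x, (#|[set y | P y && lt x y]%SET| <= n)%N -> P x ->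
    exists y, P y /\ forall z, P z -> ~~ lt y z.
  by move=> x; apply: (H _ x (leqnn _)).
elim=> [|n IH] x hc hx.
  exists x; split => // z hz; apply/negP => hlt.
  have : (0 < #|[set y | P y && lt x y]%SET|)%N.
    by apply/card_gt0P; exists z; rewrite inE hz hlt.
  by rewrite lt0n -leqn0 hc.
case: (pickP (fun z => P z && lt x z)) => [z /andP [hz hxz]|hn]; last first.
  exists x; split => // z hz; apply/negP => hlt; by move: (hn z); rewrite hz hlt.
apply: (IH z) => //.
have : (#|[set y | P y && lt z y]%SET| < #|[set y | P y && lt x y]%SET|)%N.
  apply: proper_card; apply/properP; split.
    apply/fintype.subsetP => y; rewrite !inE => /andP [-> hzy] /=; exact: tr hxz hzy.
  by exists z; rewrite !inE ?hz ?hxz ?irr ?andbF.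
move=> h; rewrite -ltnS; exact: (leq_trans h hc).
Qed.

Lemma sep (T : finType) (P Q : pred T) (p q : T -> R) :
  (forall x y, P x -> Q y -> p x <= q y) ->
  exists c, (forall x, P x -> p x <= c) /\ (forall y, Q y -> c <= q y).
Proof.
move=> H; case: (pickP P) => [x0 hx0|hP].
  case: (Order.TotalTheory.arg_maxP p hx0) => i hi hmax.
  exists (p i); split => // y hy; exact: H.
case: (pickP Q) => [y0 hy0|hQ].
  case: (Order.TotalTheory.arg_minP q hy0) => i hi hmin.
  exists (q i); split => // x; by rewrite hP.
exists 0; split => x; [by rewrite hP | by rewrite hQ].
Qed.

Lemma pos_min (T : finType) (P : pred T) (g : T -> R) :
  (forall x, P x -> 0 < g x) -> exists d, 0 < d /\ forall x, P x -> d <= g x.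
Proof.
move=> H; case: (pickP P) => [x0 hx0|hP].
  case: (Order.TotalTheory.arg_minP g hx0) => i hi hmin.
  exists (g i); split => //; exact: H.
exists 1; split => // x; by rewrite hP.
Qed.

Lemma bathtub (T : finType) (lt : rel T) (mu D f g : T -> R) :
  strict_total_order lt ->
  (forall x y, lt x y -> D x <= D y) ->
  (forall x y, lt x y -> 0 < f x -> f y = mu y) ->
  (forall x, 0 <= g x <= mu x) ->
  \sum_x f x = \sum_x g x ->
  \sum_x D x * g x <= \sum_x D x * f x.
Proof.
move=> [irr [tr tot]] hD hf hg hs.
have [c [hc1 hc2]] : exists c, (forall x, f x < mu x -> D x <= c) /\
                               (forall y, 0 < f y -> c <= D y).
  apply: (@sep T (fun x => f x < mu x) (fun y => 0 < f y) D D) => x y hx hy.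
  have [->|nxy] := eqVneq x y; first by [].
  case/orP: (tot x y nxy) => h; first exact: hD.
  by move: hx; rewrite (hf y x h hy) ltxx.
rewrite -subr_ge0 -sumrB.
have -> : \sum_x (D x * f x - D x * g x) =
          \sum_x (D x - c) * (f x - g x) + c * (\sum_x f x - \sum_x g x).
  have -> : \sum_x (D x - c) * (f x - g x) =
            \sum_x ((D x * f x - D x * g x) - c * (f x - g x)).
    by apply: eq_bigr => x _; ring.
  rewrite !sumrB -mulr_sumr !sumrB; ring.
rewrite hs subrr mulr0 addr0; apply: sumr_ge0 => x _.
have [hg0 hg1] := andP (hg x).
case: (ltgtP (D x) c) => hDc.
- have : f x <= 0 by rewrite leNgt; apply/negP => /hc2; rewrite leNgt hDc.
  nra.
- have : mu x <= f x by rewrite leNgt; apply/negP => /hc1; rewrite leNgt hDc.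
  nra.
- by rewrite hDc subrr mul0r.
Qed.

End Basics.

Section Game.
Variables (R : realType) (A Om M : finType) (mu0 : Om -> R).
Hypothesis mu_pos : forall w, 0 < mu0 w.
Hypothesis mu_sum : \sum_w mu0 w = 1.

Definition sp (f : Om -> M) : Om -> M -> R := fun w m => (m == f w)%:R.
Definition rp (b : M -> A) : M -> A -> R := fun m a => (a == b m)%:R.
Definition vv (u : A -> Om -> R) (r : M -> A -> R) m w := \sum_a r m a * u a w.
Definition EE (u : A -> Om -> R) (s : Om -> M -> R) m a :=
  \sum_w mu0 w * s w m * u a w.
Definition marg (s : Om -> M -> R) m := \sum_w mu0 w * s w m.
Definition move (s : Om -> M -> R) w0 m1 m2 (x : R) : Om -> M -> R :=
  fun w m => s w m + (w == w0)%:R * x * ((m == m2)%:R - (m == m1)%:R).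

Lemma mu_le1 w : mu0 w <= 1.
Proof.
rewrite -mu_sum (bigD1 w) //= lerDl sumr_ge0 // => i _.
exact: ltW.
Qed.

Lemma U_v u s r : U mu0 u s r = \sum_w \sum_m mu0 w * s w m * vv u r m w.
Proof.
apply: eq_bigr => w _; apply: eq_bigr => m _.
rewrite /vv mulr_sumr; apply: eq_bigr => a _; ring.
Qed.

Lemma U_E u s r : U mu0 u s r = \sum_m \sum_a r m a * EE u s m a.
Proof.
rewrite /U exchange_big /=; apply: eq_bigr => m _.
rewrite exchange_big /=; apply: eq_bigr => a _.
rewrite /EE mulr_sumr; apply: eq_bigr => w _; ring.
Qed.

Lemma vv_rp u b m w : vv u (rp b) m w = u (b m) w.
Proof. exact: sum_ind. Qed.

Lemma U_sp u f r : U mu0 u (sp f) r = \sum_w mu0 w * vv u r (f w) w.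
Proof.
rewrite U_v; apply: eq_bigr => w _.
transitivity (\sum_m (m == f w)%:R * (mu0 w * vv u r m w)).
  by apply: eq_bigr => m _; rewrite /sp; ring.
exact: sum_ind.
Qed.

Lemma U_pure u f b : U mu0 u (sp f) (rp b) = \sum_w mu0 w * u (b (f w)) w.
Proof. rewrite U_sp; apply: eq_bigr => w _; by rewrite vv_rp. Qed.

Lemma sp_msg f : msg_strat (sp f).
Proof.
move=> w; split; first by move=> m; rewrite /sp ler0n.
exact: sum_ind1.
Qed.

Lemma rp_act b : act_strat (rp b).
Proof.
move=> m; split; first by move=> a; rewrite /rp ler0n.
exact: sum_ind1.
Qed.


Lemma move_sum1 s w0 m1 m2 x m (G : Om -> R) :
  \sum_w mu0 w * move s w0 m1 m2 x w m * G w =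
  \sum_w mu0 w * s w m * G w + mu0 w0 * x * ((m == m2)%:R - (m == m1)%:R) * G w0.
Proof.
rewrite /move.
transitivity (\sum_w (mu0 w * s w m * G w +
   (w == w0)%:R * (mu0 w * x * ((m == m2)%:R - (m == m1)%:R) * G w))).
  by apply: eq_bigr => w _; ring.
by rewrite big_split /= sum_ind.
Qed.

Lemma move_sum s w0 m1 m2 x (G : Om -> M -> R) :
  \sum_w \sum_m mu0 w * move s w0 m1 m2 x w m * G w m =
  \sum_w \sum_m mu0 w * s w m * G w m + mu0 w0 * x * (G w0 m2 - G w0 m1).
Proof.
rewrite exchange_big /= [X in _ = X + _]exchange_big /=.
transitivity (\sum_m (\sum_w mu0 w * s w m * G w m +
   mu0 w0 * x * ((m == m2)%:R - (m == m1)%:R) * G w0 m)).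
  apply: eq_bigr => m _; exact: move_sum1.
rewrite big_split /=; congr (_ + _).
transitivity (\sum_m ((m == m2)%:R * (mu0 w0 * x * G w0 m) -
                     (m == m1)%:R * (mu0 w0 * x * G w0 m))).
  by apply: eq_bigr => m _; ring.
by rewrite sumrB !sum_ind; ring.
Qed.

Lemma U_move u s r w0 m1 m2 x :
  U mu0 u (move s w0 m1 m2 x) r =
  U mu0 u s r + mu0 w0 * x * (vv u r m2 w0 - vv u r m1 w0).
Proof. by rewrite !U_v (move_sum s w0 m1 m2 x (fun w m => vv u r m w)). Qed.

Lemma EE_move u s w0 m1 m2 x m a :
  EE u (move s w0 m1 m2 x) m a =
  EE u s m a + mu0 w0 * x * ((m == m2)%:R - (m == m1)%:R) * u a w0.
Proof. exact: move_sum1. Qed.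

Lemma marg_move s w0 m1 m2 x m :
  marg (move s w0 m1 m2 x) m =
  marg s m + mu0 w0 * x * ((m == m2)%:R - (m == m1)%:R).
Proof.
have := move_sum1 s w0 m1 m2 x m (fun _ => 1).
rewrite /marg.
under eq_bigr do rewrite mulr1.
under [X in _ = X + _ -> _]eq_bigr do rewrite mulr1.
by rewrite mulr1.
Qed.

Lemma move_msg s w0 m1 m2 x :
  msg_strat s -> 0 <= x -> x <= s w0 m1 -> msg_strat (move s w0 m1 m2 x).
Proof.
move=> hs x0 xle w; have [hs0 hs1] := hs w; split.
  move=> m; rewrite /move.
  have [->|nw] := eqVneq w w0; last by rewrite mul0r mul0r addr0.
  rewrite mul1r.
  have [->|nm1] := eqVneq m m1.
    case: (m1 == m2); rewrite /=; lra.
  rewrite /= subr0; have := (hs w0).1 m; case: (m == m2) => /=; nra.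
rewrite /move big_split /= hs1.
transitivity (1 + (w == w0)%:R * x * (\sum_m (m == m2)%:R - \sum_m ((m == m1)%:R : R))).
  by rewrite -sumrB mulr_sumr.
by rewrite !sum_ind1 subrr mulr0 addr0.
Qed.

Lemma RBR_pure u s b :
  (forall m a, EE u s m a <= EE u s m (b m)) -> R_BR mu0 u s (rp b).
Proof.
move=> H r' hr'; rewrite !U_E; apply: ler_sum => m _.
rewrite [X in _ <= X](sum_ind (b m) (fun a => EE u s m a)).
have [h0 h1] := hr' m.
apply: (@le_trans _ _ (\sum_a r' m a * EE u s m (b m))).
  by apply: ler_sum => a _; apply: ler_wpM2l.
by rewrite -mulr_suml h1 mul1r.
Qed.

Lemma RBR_unique u s r m b :
  act_strat r -> R_BR mu0 u s r ->
  (forall a, a != b -> EE u s m a < EE u s m b) -> forall a, r m a = (a == b)%:R.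
Proof.
move=> hr hbr hgap.
pose r'' := fun m' a => if m' == m then ((a == b)%:R : R) else r m' a.
have hr'' : act_strat r''.
  move=> m'; rewrite /r''; case: (m' == m); [exact: (rp_act (fun _ => b) m') |exact: hr].
have := hbr r'' hr''; rewrite !U_E (bigD1 m) //= [X in _ <= X](bigD1 m) //=.
have -> : \sum_(i | i != m) \sum_a r'' i a * EE u s i a =
          \sum_(i | i != m) \sum_a r i a * EE u s i a.
  by apply: eq_bigr => i /negbTE hi; rewrite /r'' hi.
rewrite lerD2r /r'' eqxx (sum_ind b (fun a => EE u s m a)) => hle.
have [h0 h1] := hr m.
have hsum : \sum_a r m a * (EE u s m b - EE u s m a) = 0.
  apply/eqP; rewrite eq_le; apply/andP; split.
    rewrite (eq_bigr (fun a => r m a * EE u s m b - r m a * EE u s m a)); last first.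
      by move=> a _; rewrite mulrBr.
    by rewrite sumrB -mulr_suml h1 mul1r subr_le0.
  apply: sumr_ge0 => a _; apply: mulr_ge0 => //.
  have [->|nab] := eqVneq a b; first by rewrite subrr.
  by rewrite subr_ge0 ltW // hgap.
have hnn : forall a, true -> 0 <= r m a * (EE u s m b - EE u s m a).
  move=> a' _; apply: mulr_ge0 => //.
  have [->|nab] := eqVneq a' b; first by rewrite subrr.
  by rewrite subr_ge0 ltW // hgap.
have hz := psumr_eq0P hnn hsum.
have hoff : forall a, a != b -> r m a = 0.
  move=> a nab; have /eqP := hz a isT; rewrite mulf_eq0 => /orP [/eqP //|].
  by rewrite subr_eq0 => /eqP e; have := hgap a nab; rewrite e ltxx.
move=> a; have [->|nab] := eqVneq a b; last by rewrite hoff.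
move: h1; rewrite (bigD1 b) //= big1 ?addr0 //.
Qed.

Section Partition.
Variables (uS uR : A -> Om -> R) (a0 : A) (w0 : Om).
Hypothesis uR01 : forall a w, 0 <= uR a w <= 1.
Hypothesis gen : forall (P : {set Om}), (0 < #|P|)%N -> forall a a', a != a' ->
  \sum_(w in P) mu0 w * (uR a w - uR a' w) != 0.

Definition used (f : Om -> M) m := [exists w, f w == m].
Definition Ef f m a := EE uR (sp f) m a.

Lemma Ef_diff f m a a' :
  Ef f m a - Ef f m a' = \sum_(w | f w == m) mu0 w * (uR a w - uR a' w).
Proof.
rewrite /Ef /EE -sumrB [in RHS]big_mkcond /=; apply: eq_bigr => w _.
rewrite /sp eq_sym; case: (f w == m); rewrite /=; ring.
Qed.

Lemma Ef_unused f m a : ~~ used f m -> Ef f m a = 0.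
Proof.
move=> hu; rewrite /Ef /EE big1 // => w _; rewrite /sp.
have -> : (m == f w) = false.
  apply/negbTE; apply: contra hu => /eqP ->; apply/existsP; by exists w.
by rewrite /= mulr0 mul0r.
Qed.

Definition beta f m := [arg max_(a > a0) Ef f m a]%O.

Lemma beta_max f m a : Ef f m a <= Ef f m (beta f m).
Proof.
rewrite /beta; case: (Order.TotalTheory.arg_maxP (fun a => Ef f m a) (isT : predT a0)).
by move=> i _ H; apply: H.
Qed.

Lemma beta_strict f m a : used f m -> a != beta f m -> Ef f m a < Ef f m (beta f m).
Proof.
move=> /existsP [w /eqP hw] na; rewrite lt_neqAle beta_max andbT.
rewrite -subr_eq0 Ef_diff.
have := gen (P := [set w | f w == m]%SET) _ na.
rewrite (eq_bigl (fun w => f w == m)); last by move=> x; rewrite finset.in_set.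
apply; apply/card_gt0P; exists w; by rewrite finset.in_set hw.
Qed.

Definition beta' f m := if used f m then beta f m else beta f (f w0).
Definition alpha f w := beta f (f w).

Lemma used_f f w : used f (f w).
Proof. apply/existsP; by exists w. Qed.

Lemma beta'_f f w : beta' f (f w) = alpha f w.
Proof. by rewrite /beta' used_f. Qed.

Lemma beta'_range f m : exists w, beta' f m = alpha f w.
Proof.
rewrite /beta'; case: ifP => [/existsP [w /eqP <-]|_]; last by exists w0.
by exists w.
Qed.

Lemma Ef_le_beta' f m a : Ef f m a <= Ef f m (beta' f m).
Proof.
rewrite /beta'; case: ifP => hu; first exact: beta_max.
by rewrite !Ef_unused ?hu.
Qed.

Lemma sp_RBR f : R_BR mu0 uR (sp f) (rp (beta' f)).
Proof. apply: RBR_pure => m a; exact: Ef_le_beta'. Qed.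

Lemma unused_zero f s' m w : msg_strat s' -> same_marginal mu0 (sp f) s' ->
  ~~ used f m -> s' w m = 0.
Proof.
move=> hs hm hu.
have h0 : \sum_w mu0 w * s' w m = 0.
  rewrite hm big1 // => x _; rewrite /sp.
  have -> : (m == f x) = false.
    apply/negbTE; apply: contra hu => /eqP ->; exact: used_f.
  by rewrite mulr0.
have hnn : forall x, true -> 0 <= mu0 x * s' x m.
  move=> x _; apply: mulr_ge0; [exact: ltW | exact: (hs x).1].
have hz := psumr_eq0P hnn h0.
have /eqP := hz w isT.
rewrite mulf_eq0 => /orP [/eqP e|/eqP //].
by have := mu_pos w; rewrite e ltxx.
Qed.

Lemma vv_alpha f r w w' : (forall a, r (f w) a = (a == alpha f w)%:R) ->
  vv uS r (f w) w' = uS (alpha f w) w'.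
Proof.
move=> h; rewrite /vv (eq_bigr (fun a => (a == alpha f w)%:R * uS a w')).
  exact: sum_ind.
by move=> a _; rewrite h.
Qed.

Lemma transfer s r : curve_eq mu0 uS uR s r -> partitional s ->
  exists f, s = sp f /\ U mu0 uS s r = \sum_w mu0 w * uS (alpha f w) w /\
            curve_eq mu0 uS uR (sp f) (rp (beta' f)).
Proof.
move=> [hs [hr [hcurve hbr]]] hp.
have hex : forall w, exists m, s w m == 1.
  move=> w; have [m hm] := hp w; exists m; by rewrite hm.
pose f := fun w => xchoose (hex w).
have hf : forall w, s w (f w) = 1 by move=> w; apply/eqP; exact: (xchooseP (hex w)).
have hsf : s = sp f.
  apply: funext => w; apply: funext => m; rewrite /sp.
  have [->|nm] := eqVneq m (f w); first by rewrite hf.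
  have [h0 h1] := hs w.
  have hz : \sum_(m' | m' != f w) s w m' = 0.
    by move: h1; rewrite (bigD1 (f w)) //= hf; lra.
  by rewrite (psumr_eq0P (fun i _ => h0 i) hz).
rewrite hsf in hcurve hbr *.
have hrm : forall w a, r (f w) a = (a == alpha f w)%:R.
  move=> w; apply: (RBR_unique hr hbr) => a na.
  exact: (beta_strict (used_f f w) na).
have hval : U mu0 uS (sp f) r = \sum_w mu0 w * uS (alpha f w) w.
  rewrite U_sp; apply: eq_bigr => w _; by rewrite (vv_alpha w (hrm w)).
exists f; split => //; split => //.
split; first exact: sp_msg.
split; first exact: rp_act.
split; last exact: sp_RBR.
move=> s' hs' hm.
have -> : U mu0 uS (sp f) (rp (beta' f)) = U mu0 uS (sp f) r.
  by rewrite hval U_pure; apply: eq_bigr => w _; rewrite beta'_f.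
have -> : U mu0 uS s' (rp (beta' f)) = U mu0 uS s' r.
  rewrite !U_v; apply: eq_bigr => w _; apply: eq_bigr => m _.
  have [hu|hu] := boolP (used f m).
    move/existsP: hu => [w1 /eqP <-].
    by rewrite vv_rp (vv_alpha w (hrm w1)) beta'_f.
  by rewrite (unused_zero w hs' hm hu) !mulr0 !mul0r.
exact: hcurve.
Qed.

Lemma IC_ct f : (forall w w', uS (alpha f w') w <= uS (alpha f w) w) ->
  cheap_talk_eq mu0 uS uR (sp f) (rp (beta' f)).
Proof.
move=> hic; split; first exact: sp_msg.
split; first exact: rp_act.
split; last exact: sp_RBR.
move=> s' hs'; rewrite U_v U_pure.
apply: ler_sum => w _.
apply: (@le_trans _ _ (\sum_m mu0 w * s' w m * uS (alpha f w) w)).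
  apply: ler_sum => m _; rewrite vv_rp.
  have [w' ->] := beta'_range f m.
  apply: ler_wpM2l; last exact: hic.
  apply: mulr_ge0; [exact: ltW | exact: (hs' w).1].
rewrite beta'_f -!mulr_suml -mulr_sumr (hs' w).2 mulr1 //.
Qed.

Section Orders.
Variables (ltA : rel A) (ltO : rel Om).
Hypothesis toA : strict_total_order ltA.
Hypothesis toO : strict_total_order ltO.
Hypothesis sm : forall a a' w w', ltA a a' -> ltO w w' ->
      uS a' w - uS a w < uS a' w' - uS a w'.

Lemma ltO_neq w1 w2 : ltO w1 w2 -> w1 != w2.
Proof. by move=> h; apply/eqP => e; move: h; rewrite e; have := toO.1 w2 => /negbTE ->. Qed.
Lemma ltA_neq a1 a2 : ltA a1 a2 -> a1 != a2.
Proof. by move=> h; apply/eqP => e; move: h; rewrite e; have := toA.1 a2 => /negbTE ->. Qed.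

Lemma mono f : curve_eq mu0 uS uR (sp f) (rp (beta' f)) ->
  forall w1 w2, ltO w1 w2 -> ~~ ltA (alpha f w2) (alpha f w1).
Proof.
move=> [_ [_ [hc _]]] w1 w2 hlt; apply/negP => hA.
have n12 := ltO_neq hlt.
have nf : f w1 != f w2.
  apply/eqP => e; have := ltA_neq hA; by rewrite /alpha e eqxx.
pose s1 := move (sp f) w1 (f w1) (f w2) (mu0 w2).
pose s2 := move s1 w2 (f w2) (f w1) (mu0 w1).
have hs1 : msg_strat s1.
  apply: move_msg; [exact: sp_msg | exact: ltW | by rewrite /sp eqxx mu_le1].
have hs2 : msg_strat s2.
  apply: move_msg => //; first exact: ltW.
  by rewrite /s1 /move /sp eqxx eq_sym (negbTE n12) mul0r mul0r addr0 mu_le1.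
have hm : same_marginal mu0 (sp f) s2.
  move=> m; rewrite -/(marg s2 m) -/(marg (sp f) m) /s2 marg_move /s1 marg_move.
  ring.
have := hc s2 hs2 hm.
rewrite /s2 /s1 !U_move !vv_rp !beta'_f.
have := sm hA hlt.
have := mulr_gt0 (mu_pos w1) (mu_pos w2).
nra.
Qed.

Definition leA x y := (x == y) || ltA x y.
Definition sa := sort leA (enum A).
Definition idx a := index a sa.
Definition KA := size sa.

Lemma leA_total : total leA.
Proof.
move=> x y; rewrite /leA; have [->|nxy] := eqVneq x y; first by [].
by move: (toA.2.2 x y nxy) => /orP [->|->]; rewrite ?orbT.
Qed.
Lemma leA_trans : transitive leA.
Proof.
move=> y x z; rewrite /leA => /orP [/eqP ->|hxy] // /orP [/eqP <-|hyz].
  by rewrite hxy orbT.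
by rewrite (toA.2.1 _ _ _ hxy hyz) orbT.
Qed.
Lemma leA_refl : reflexive leA.
Proof. by move=> x; rewrite /leA eqxx. Qed.

Lemma sa_sorted : sorted leA sa.
Proof. exact: sort_sorted leA_total _. Qed.
Lemma mem_sa a : a \in sa.
Proof. by rewrite /sa mem_sort mem_enum. Qed.
Lemma uniq_sa : uniq sa.
Proof. by rewrite /sa sort_uniq enum_uniq. Qed.

Lemma lt_idx a b : (idx a < idx b)%N -> ltA a b.
Proof.
move=> h; have := sorted_ltn_index leA_trans sa_sorted a b (mem_sa a) (mem_sa b) h.
rewrite /leA => /orP [/eqP e|//]; by move: h; rewrite e ltnn.
Qed.

Lemma idx_lt a b : ltA a b -> (idx a < idx b)%N.
Proof.
move=> h; rewrite ltnNge; apply/negP => hle.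
have := sorted_leq_index leA_trans leA_refl sa_sorted b a (mem_sa b) (mem_sa a) hle.
rewrite /leA => /orP [/eqP e|h2].
  by move: h; rewrite e; have := toA.1 a => /negbTE ->.
have := toA.2.1 _ _ _ h h2; by have := toA.1 a => /negbTE ->.
Qed.

Lemma idx_ltK a : (idx a < KA)%N.
Proof. by rewrite /idx /KA index_mem mem_sa. Qed.
Lemma nth_idx a : nth a0 sa (idx a) = a.
Proof. by rewrite /idx nth_index // mem_sa. Qed.
Lemma idx_nth j : (j < KA)%N -> idx (nth a0 sa j) = j.
Proof. move=> h; by rewrite /idx index_uniq // uniq_sa. Qed.
Lemma nth_lt j : (j.+1 < KA)%N -> ltA (nth a0 sa j) (nth a0 sa j.+1).
Proof.
move=> h; apply: lt_idx; rewrite !idx_nth //; exact: ltn_trans (ltnSn j) h.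
Qed.

Definition hh w j := uS (nth a0 sa j) w.
Definition Dl j w := hh w j.+1 - hh w j.

Lemma uS_tele a w :
  uS a w = hh w 0 + \sum_(0 <= j < KA.-1) (j < idx a)%:R * Dl j w.
Proof.
have hi : (idx a <= KA.-1)%N by rewrite -ltnS prednK ?idx_ltK // (leq_ltn_trans _ (idx_ltK a)).
rewrite (big_cat_nat (leq0n (idx a)) hi) /=.
rewrite [X in _ + (_ + X)]big1_seq ?addr0; last first.
  move=> j /andP [_]; rewrite mem_index_iota => /andP [hj _]; by rewrite ltnNge hj mul0r.
rewrite (eq_big_nat _ _ (F2 := fun j => hh w j.+1 - hh w j)); last first.
  by move=> j /andP [_ hj]; rewrite hj mul1r.
by rewrite telescope_sumr // /hh nth_idx addrC subrK.
Qed.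

Lemma Dl_mono j : (j.+1 < KA)%N -> forall x y, ltO x y -> Dl j x <= Dl j y.
Proof. move=> hj x y hxy; rewrite /Dl /hh; apply: ltW; exact: sm (nth_lt hj) hxy. Qed.

Definition FF (b : M -> A) (s : Om -> M -> R) j w :=
  \sum_m mu0 w * s w m * (j < idx (b m))%:R.

Lemma U_decomp b s : msg_strat s ->
  U mu0 uS s (rp b) = \sum_w mu0 w * hh w 0 +
     \sum_(0 <= j < KA.-1) \sum_w Dl j w * FF b s j w.
Proof.
move=> hs; rewrite U_v.
have -> : \sum_w \sum_m mu0 w * s w m * vv uS (rp b) m w =
   \sum_w (mu0 w * hh w 0 * \sum_m s w m +
     \sum_m \sum_(0 <= j < KA.-1) mu0 w * s w m * ((j < idx (b m))%:R * Dl j w)).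
  apply: eq_bigr => w _; rewrite mulr_sumr -big_split /=; apply: eq_bigr => m _.
  rewrite vv_rp uS_tele -mulr_sumr; ring.
rewrite big_split /=; congr (_ + _).
  by apply: eq_bigr => w _; rewrite (hs w).2 mulr1.
transitivity (\sum_w \sum_(0 <= j < KA.-1) \sum_m mu0 w * s w m * ((j < idx (b m))%:R * Dl j w)).
  by apply: eq_bigr => w _; rewrite exchange_big.
rewrite exchange_big /=; apply: eq_big_nat => j _; apply: eq_bigr => w _.
rewrite /FF mulr_sumr; apply: eq_bigr => m _; ring.
Qed.

Lemma FF_sum b s j : \sum_w FF b s j w = \sum_m (j < idx (b m))%:R * marg s m.
Proof.
rewrite /FF exchange_big /=; apply: eq_bigr => m _.
rewrite /marg mulr_sumr; apply: eq_bigr => w _; ring.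
Qed.

Lemma KA_gt0 : (0 < KA)%N.
Proof. exact: (leq_ltn_trans _ (idx_ltK a0)). Qed.

Lemma opt_monotone b s : msg_strat s ->
  (forall x y m1 m2, ltO x y -> 0 < s x m1 -> 0 < s y m2 -> ~~ ltA (b m2) (b m1)) ->
  forall s'', msg_strat s'' -> same_marginal mu0 s s'' ->
  U mu0 uS s'' (rp b) <= U mu0 uS s (rp b).
Proof.
move=> hs hmon s'' hs'' hm.
rewrite !U_decomp // lerD2l; apply: ler_sum_nat => j /andP [_ hj].
have hj1 : (j.+1 < KA)%N by rewrite -(prednK KA_gt0) ltnS.
apply: (bathtub (mu := mu0) toO (Dl_mono hj1)).
- move=> x y hxy hpos.
  have [m1 [hm1 hj1']] : exists m1, 0 < s x m1 /\ (j < idx (b m1))%N.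
    apply/not_existsP => hn; move: hpos; rewrite /FF big1 ?ltxx // => m _.
    have h0 := (hs x).1 m.
    case: (boolP (j < idx (b m))%N) => hjm; last by rewrite mulr0.
    have : s x m = 0.
      apply/eqP; rewrite eq_le h0 andbT leNgt; apply/negP => hp; by apply: (hn m).
    by move=> ->; rewrite mulr0 mul0r.
  rewrite /FF; transitivity (\sum_m mu0 y * s y m); last first.
    by rewrite -mulr_sumr (hs y).2 mulr1.
  apply: eq_bigr => m _.
  have h0 := (hs y).1 m.
  have [e|hp] := eqVneq (s y m) 0; first by rewrite e !mulr0 mul0r.
  have hp' : 0 < s y m by rewrite lt_neqAle eq_sym hp h0.
  have := hmon x y m1 m hxy hm1 hp'.
  move=> hn; have : (idx (b m1) <= idx (b m))%N.
    by rewrite leqNgt; apply/negP => /lt_idx; apply/negP.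
  move=> hle; by rewrite (leq_trans hj1' hle) mulr1.
- move=> w; apply/andP; split.
    apply: sumr_ge0 => m _; apply: mulr_ge0; last by rewrite ler0n.
    apply: mulr_ge0; [exact: ltW | exact: (hs'' w).1].
  rewrite /FF; apply: (@le_trans _ _ (\sum_m mu0 w * s'' w m)); last first.
    by rewrite -mulr_sumr (hs'' w).2 mulr1.
  apply: ler_sum => m _.
  rewrite -[X in _ <= X]mulr1; apply: ler_wpM2l.
    apply: mulr_ge0; [exact: ltW | exact: (hs'' w).1].
  by case: (j < idx (b m))%N; rewrite ?ler01 ?lexx.
- rewrite !FF_sum; apply: eq_bigr => m _; by rewrite /marg hm.
Qed.

Lemma good_pair f :
  (forall w1 w2, ltO w1 w2 -> ~~ ltA (alpha f w2) (alpha f w1)) ->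
  forall w wc, ltA (alpha f w) (alpha f wc) -> uS (alpha f w) w < uS (alpha f wc) w ->
  exists w' wc', [/\ ltA (alpha f w') (alpha f wc'),
    uS (alpha f w') w' < uS (alpha f wc') w' &
    forall y, ltO w' y -> ~~ ltA (alpha f y) (alpha f wc')].
Proof.
move=> hmono.
have [irrA [trA totA]] := toA; have [irrO [trO totO]] := toO.
have irrA' : forall x, ltA x x = false := fun x => negbTE (irrA x).
pose al := alpha f.
pose dist w c := #|[set x | ltA (al w) (al x) && ltA (al x) c]%SET|.
suff H : forall n w wc, (dist w (al wc) <= n)%N ->
    ltA (al w) (al wc) -> uS (al w) w < uS (al wc) w ->
    exists w' wc', [/\ ltA (al w') (al wc'), uS (al w') w' < uS (al wc') w' &
      forall y, ltO w' y -> ~~ ltA (al y) (al wc')].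
  by move=> w wc; apply: (H _ w wc (leqnn _)).
elim=> [|n IH] w wc hd hlt hu.
all: case: (pickP (fun x => ltA (al w) (al x) && ltA (al x) (al wc))) => [x /andP [h1 h2]|hnone].
- have : (0 < dist w (al wc))%N by apply/card_gt0P; exists x; rewrite inE h1 h2.
  by rewrite lt0n -leqn0 hd.
- have [w' [hw'1 hw'2]] := @exists_max _ _ toO (fun y => al y == al w) w (eqxx (al w)).
  move/eqP: hw'1 => hw'1.
  exists w', wc; split; first by rewrite hw'1.
    have [<-|nww] := eqVneq w w'; first by [].
    have hww : ltO w w'.
      case/orP: (totO _ _ nww) => // h; by have := hw'2 w (eqxx _); rewrite h.
    have := sm hlt hww; rewrite hw'1; lra.
  move=> y hy; apply/negP => hyc.
  have := hmono _ _ hy => hn.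
  have [e|nye] := eqVneq (al y) (al w').
    by have := hw'2 y; rewrite e hw'1 eqxx hy => /(_ isT).
  case/orP: (totA _ _ nye) => h; first by move: hn; rewrite h.
  by have := hnone y; rewrite -hw'1 h hyc.
- have [huw|huw] := ltP (uS (al w) w) (uS (al x) w).
  + apply: (IH w x) => //.
    have hlt' : (dist w (al x) < dist w (al wc))%N.
      apply: proper_card; apply/properP; split.
        apply/fintype.subsetP => y; rewrite !inE => /andP [-> hyx] /=; exact: trA hyx h2.
      by exists x; rewrite !inE ?h1 ?h2 ?irrA' ?andbF.
    by rewrite -ltnS (leq_trans hlt' hd).
  + have nwx : w != x by apply/eqP => e; move: h1; rewrite e irrA'.
    have hwx : ltO w x.
      case/orP: (totO _ _ nwx) => // h; by move: (hmono _ _ h); rewrite h1.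
    apply: (IH x wc) => //.
      have hlt' : (dist x (al wc) < dist w (al wc))%N.
        apply: proper_card; apply/properP; split.
          apply/fintype.subsetP => y; rewrite !inE => /andP [hxy ->]; rewrite andbT; exact: trA h1 hxy.
        by exists x; rewrite !inE ?h1 ?h2 ?irrA'.
      by rewrite -ltnS (leq_trans hlt' hd).
    have := sm h2 hwx; lra.
- have [w' [hw'1 hw'2]] := @exists_max _ _ toO (fun y => al y == al w) w (eqxx (al w)).
  move/eqP: hw'1 => hw'1.
  exists w', wc; split; first by rewrite hw'1.
    have [<-|nww] := eqVneq w w'; first by [].
    have hww : ltO w w'.
      case/orP: (totO _ _ nww) => // h; by have := hw'2 w (eqxx _); rewrite h.
    have := sm hlt hww; rewrite hw'1; lra.
  move=> y hy; apply/negP => hyc.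
  have := hmono _ _ hy => hn.
  have [e|nye] := eqVneq (al y) (al w').
    by have := hw'2 y; rewrite e hw'1 eqxx hy => /(_ isT).
  case/orP: (totA _ _ nye) => h; first by move: hn; rewrite h.
  by have := hnone y; rewrite -hw'1 h hyc.
Qed.

Lemma nonIC_up f :
  (forall w1 w2, ltO w1 w2 -> ~~ ltA (alpha f w2) (alpha f w1)) ->
  forall w wc, ltA (alpha f w) (alpha f wc) -> uS (alpha f w) w < uS (alpha f wc) w ->
  exists (s : Om -> M -> R) (r : M -> A -> R), curve_eq mu0 uS uR s r /\
     \sum_w mu0 w * uS (alpha f w) w < U mu0 uS s r.
Proof.
move=> hmono w0' wc0 hlt0 hu0.
have [irrA [trA totA]] := toA; have [irrO [trO totO]] := toO.
have irrA' : forall x, ltA x x = false := fun x => negbTE (irrA x).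
have [w' [wc [hlt hu hgood]]] := good_pair hmono hlt0 hu0.
pose m1 := f w'; pose m2 := f wc.
have nm : m1 != m2.
  apply/eqP => e; move: hlt; rewrite /alpha -/m1 -/m2 e irrA'.
  done.
have [d [hd0 hd]] : exists d : R, 0 < d /\ forall p : M * A,
    used f p.1 && (p.2 != beta f p.1) -> d <= Ef f p.1 (beta f p.1) - Ef f p.1 p.2.
  apply: pos_min => p /andP [h1 h2]; rewrite subr_gt0; exact: beta_strict h1 h2.
pose e := Num.min d 1.
have he0 : 0 < e by rewrite lt_min hd0 ltr01.
have hed : e <= d by rewrite ge_min lexx.
have he1 : e <= 1 by rewrite ge_min lexx orbT.
pose s' := move (sp f) w' m1 m2 e.
have hs' : msg_strat s'.
  apply: move_msg; [exact: sp_msg | exact: ltW | by rewrite /sp /m1 eqxx].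
have supp : forall x n, 0 < s' x n ->
    beta' f n = alpha f x \/ (x = w' /\ beta' f n = alpha f wc).
  move=> x n; rewrite /s' /move /sp.
  have [->|nxn] := eqVneq n (f x); first by rewrite beta'_f; left.
  have [exw|nxw] := eqVneq x w'; last by rewrite mul0r mul0r addr0 ltxx.
  have [en2|nn2] := eqVneq n m2; first by right; rewrite en2 /m2 beta'_f.
  have [en1|nn1] := eqVneq n m1; first by move: nxn; rewrite exw en1 /m1 eqxx.
  by rewrite /= subrr mulr0 addr0 ltxx.
exists s', (rp (beta' f)); split.
  split => //; split; first exact: rp_act.
  split.
    apply: opt_monotone => // x y n1 n2 hxy hp1 hp2.
    case: (supp _ _ hp1) => [-> | [ex ->]]; case: (supp _ _ hp2) => [-> | [ey ->]].
    - exact: hmono.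
    - rewrite ey in hxy *; apply/negP => hc.
      by move: (hmono _ _ hxy); rewrite (trA _ _ _ hlt hc).
    - rewrite ex in hxy *; exact: hgood.
    - by move: hxy; rewrite ex ey (negbTE (irrO _)).
  apply: RBR_pure => n a.
  rewrite !EE_move.
  have [hun|hun] := boolP (used f n).
    rewrite /beta' hun.
    have [->|na] := eqVneq a (beta f n); first by [].
    have hdd := hd (n, a) (ltac:(by rewrite /= hun na)); rewrite /= in hdd.
    rewrite /Ef in hdd.
    have hmu := mu_le1 w'; have hmu0 := mu_pos w'.
    have [ha1 ha2] := andP (uR01 a w'); have [hb1 hb2] := andP (uR01 (beta f n) w').
    have hk : forall k : R, (k = 0 \/ k = 1 \/ k = -1) ->
        mu0 w' * e * k * uR a w' - mu0 w' * e * k * uR (beta f n) w' <= e.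
      move=> k hk'.
      have hq : mu0 w' * (k * (uR a w' - uR (beta f n) w')) <= 1.
        by case: hk' => [->|[->|->]]; nra.
      have : e * (mu0 w' * (k * (uR a w' - uR (beta f n) w'))) <= e * 1.
        by apply: ler_wpM2l => //; exact: ltW.
      rewrite mulr1 => h; apply: le_trans h; rewrite le_eqVlt; apply/orP; left; apply/eqP; ring.
    have := hk ((n == m2)%:R - (n == m1)%:R).
    case: (n == m2); case: (n == m1); rewrite /=;
      (have : (1 - 1 : R) = 0 by rewrite subrr); (have : (0 - 0 : R) = 0 by rewrite subrr);
      (have : (1 - 0 : R) = 1 by rewrite subr0); (have : (0 - 1 : R) = -1 by rewrite sub0r);
      move=> h1 h2 h3 h4 H; lra.
  have n1 : n != m1 by apply: contra hun => /eqP ->; exact: used_f.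
  have n2 : n != m2 by apply: contra hun => /eqP ->; exact: used_f.
  rewrite (negbTE n1) (negbTE n2) subrr !mulr0 !mul0r !addr0.
  by change (Ef f n a <= Ef f n (beta' f n)); rewrite !Ef_unused.
rewrite U_move !vv_rp U_pure /m1 /m2 !beta'_f.
have : 0 < mu0 w' * e * (uS (alpha f wc) w' - uS (alpha f w') w').
  by apply: mulr_gt0; [apply: mulr_gt0 | rewrite subr_gt0].
have -> : \sum_w mu0 w * uS (beta' f (f w)) w = \sum_w mu0 w * uS (alpha f w) w.
  by apply: eq_bigr => x _; rewrite beta'_f.
lra.
Qed.

End Orders.

Definition Val f := \sum_w mu0 w * uS (alpha f w) w.

Lemma key (ltA : rel A) (ltO : rel Om) :
  strict_total_order ltA -> strict_total_order ltO ->
  (forall a a' w w', ltA a a' -> ltO w w' -> uS a' w - uS a w < uS a' w' - uS a w') ->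
  forall (s : Om -> M -> R) (r : M -> A -> R), curve_eq mu0 uS uR s r -> partitional s ->
  exists f, U mu0 uS s r = Val f /\
    (cheap_talk_eq mu0 uS uR (sp f) (rp (beta' f)) \/
     exists (s' : Om -> M -> R) (r' : M -> A -> R),
        curve_eq mu0 uS uR s' r' /\ Val f < U mu0 uS s' r').
Proof.
move=> toA toO sm s r hc hp.
have [f [_ [hval hcf]]] := transfer hc hp.
exists f; split => //.
have hmono := mono toA toO sm hcf.
case: (boolP [forall w, forall w2, uS (alpha f w2) w <= uS (alpha f w) w]) => hic.
  left; apply: IC_ct => w w2; by move/forallP: hic => /(_ w) /forallP /(_ w2).
right.
move/forallPn: hic => [w /forallPn [w2]]; rewrite -ltNge => hlt.
have nw : alpha f w != alpha f w2.
  by apply/eqP => e; move: hlt; rewrite e ltxx.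
case/orP: (toA.2.2 _ _ nw) => hA.
  exact: (nonIC_up toA toO sm hmono hA hlt).
have [irrA [trA totA]] := toA; have [irrO [trO totO]] := toO.
have toA' : strict_total_order (fun x y => ltA y x).
  split => // ; split; first by move=> x y z h1 h2; exact: trA h2 h1.
  by move=> x y nxy; rewrite orbC; apply: totA.
have toO' : strict_total_order (fun x y => ltO y x).
  split => // ; split; first by move=> x y z h1 h2; exact: trO h2 h1.
  by move=> x y nxy; rewrite orbC; apply: totO.
have sm' : forall a a' w w', ltA a' a -> ltO w' w ->
    uS a' w - uS a w < uS a' w' - uS a w'.
  by move=> a a' x x' h1 h2; have := sm _ _ _ _ h1 h2; lra.
apply: (nonIC_up toA' toO' sm' _ hA hlt).
by move=> w1 w3 h; apply: hmono.
Qed.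

Lemma U_bound (u : A -> Om -> R) (s : Om -> M -> R) r : msg_strat s -> act_strat r ->
  U mu0 u s r <= \sum_w \sum_a `|u a w|.
Proof.
move=> hs hr; rewrite /U; apply: ler_sum => w _.
rewrite exchange_big /=; apply: ler_sum => a _.
have hr1 : forall m, r m a <= 1.
  move=> m; have [h0 h1] := hr m; rewrite -h1 (bigD1 a) //= lerDl.
  by apply: sumr_ge0 => i _.
apply: (@le_trans _ _ (\sum_m mu0 w * s w m * `|u a w|)).
  apply: ler_sum => m _.
  have h0 : 0 <= mu0 w * s w m by apply: mulr_ge0; [exact: ltW | exact: (hs w).1].
  rewrite -mulrA; apply: ler_wpM2l => //.
  apply: (@le_trans _ _ (r m a * `|u a w|)); first by apply: ler_wpM2l; [exact: (hr m).1 | exact: ler_norm].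
  by rewrite -[X in _ <= X]mul1r; apply: ler_wpM2r => //.
rewrite -mulr_suml -mulr_sumr (hs w).2 mulr1 -[X in _ <= X]mul1r.
by apply: ler_wpM2r => //; exact: mu_le1.
Qed.

Lemma curve_const m0 : curve_eq mu0 uS uR (sp (fun _ => m0)) (rp (beta' (fun _ => m0))).
Proof.
split; first exact: sp_msg.
split; first exact: rp_act.
split; last exact: sp_RBR.
move=> s' hs' hm.
have -> : s' = sp (fun _ => m0) => //.
apply: funext => w; apply: funext => m; rewrite /sp.
have [->|nm] := eqVneq m m0.
  have [h0 h1] := hs' w.
  move: h1; rewrite (bigD1 m0) //= big1 ?addr0 // => m' hm'.
  apply: (unused_zero _ hs' hm); apply/existsP => [[x /eqP e]]; by move: hm'; rewrite e eqxx.
apply: (unused_zero _ hs' hm); apply/existsP => [[x /eqP e]]; by move: nm; rewrite e eqxx.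
Qed.

Lemma part2 (m0 : M) (ltA : rel A) (ltO : rel Om) :
  strict_total_order ltA -> strict_total_order ltO ->
  (forall a a' w w', ltA a a' -> ltO w w' -> uS a' w - uS a w < uS a' w' - uS a w') ->
  values_committing M mu0 uS uR -> values_randomization M mu0 uS uR.
Proof.
move=> toA toO sm.
rewrite /values_committing /values_randomization /cheap_talk_payoff /curve_payoff
  /curve_partitional_payoff.
set CT := [set x | _]; set CV := [set x | _]; set CP := [set x | _] => hcom.
pose Bd := \sum_w \sum_a `|uS a w|.
have hubCT : has_ubound CT.
  exists Bd => x [s [r [[hs [hr _]] ->]]]; exact: U_bound.
have hubCV : has_ubound CV.
  exists Bd => x [s [r [[hs [hr _]] ->]]]; exact: U_bound.
pose B := \big[Num.max/sup CT]_(g : {ffun Om -> M} | Val g < sup CV) Val g.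
have hB : B < sup CV.
  rewrite /B; apply: (big_ind (fun v => v < sup CV)) => //.
  by move=> x y hx hy; rewrite gt_max hx hy.
have hBct : sup CT <= B.
  rewrite /B; apply: (big_rec (fun v => sup CT <= v)) => // i v _ hv.
  by rewrite le_max hv orbT.
have hCP : forall x, CP x -> x <= B.
  move=> x [s [r [[hc hp] ->]]].
  have [f [-> [hct|[s' [r' [hc' hlt]]]]]] := key toA toO sm hc hp.
    apply: le_trans hBct.
    have -> : Val f = U mu0 uS (sp f) (rp (beta' f)).
      by rewrite U_pure /Val; apply: eq_bigr => w _; rewrite beta'_f.
    apply: ub_le_sup => //; by exists (sp f), (rp (beta' f)).
  pose g : {ffun Om -> M} := [ffun w => f w].
  have hg : Val g = Val f.
    rewrite /Val /alpha; apply: eq_bigr => w _; rewrite ffunE.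
    congr (_ * uS _ w); rewrite /beta; congr (Order.arg_max _ _ _).
    apply: funext => a; rewrite /Ef /EE; apply: eq_bigr => w1 _; by rewrite /sp ffunE.
  have hgl : Val g < sup CV.
    rewrite hg; apply: (lt_le_trans hlt); apply: ub_le_sup => //.
    by exists s', r'.
  rewrite -hg /B (bigD1 g) //=; by rewrite le_max lexx.
have hne : CP !=set0.
  exists (U mu0 uS (sp (fun _ => m0)) (rp (beta' (fun _ => m0)))).
  exists (sp (fun _ => m0)), (rp (beta' (fun _ => m0))); split => //; split.
    exact: curve_const.
  by move=> w; exists m0; rewrite /sp eqxx.
apply: le_lt_trans hB; exact: ge_sup hne hCP.
Qed.

End Partition.

End Game.

Section Cell.
Variable R : realType.

Definition cell n (x : R) : 'I_n.+1 := inord (minn (Num.truncn (x * n.+1%:R)) n).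

Lemma cell_bounds n (x : R) : 0 <= x <= 1 ->
  (cell n x)%:R / n.+1%:R <= x <= (cell n x).+1%:R / n.+1%:R.
Proof.
move=> /andP [x0 x1].
have hN : (0 : R) < n.+1%:R by rewrite ltr0n.
have hy : 0 <= x * n.+1%:R by apply: mulr_ge0 => //; exact: ltW.
have /andP [t1 t2] := Num.Theory.truncn_itv hy.
set t := Num.truncn (x * n.+1%:R) in t1 t2 *.
have hc : (cell n x : nat) = minn t n.
  by rewrite /cell inordK // ltnS geq_minr.
rewrite hc ler_pdivrMr // ler_pdivlMr //; apply/andP; split.
  apply: le_trans t1; rewrite ler_nat; exact: geq_minl.
case: (leqP t n) => htn.
  by apply: ltW.
rewrite -[X in _ <= X]mul1r; apply: ler_wpM2r => //.
Qed.

End Cell.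

Section Hyper.
Variables (R : realType) (A Om : finType).
Variables (c : A -> Om -> R) (pa : A) (pw : Om).
Hypothesis hc : c pa pw != 0.
Variable n : nat.

Let N : R := n.+1%:R.
Lemma N_gt0 : 0 < N. Proof. by rewrite /N ltr0n. Qed.

Definition isp b w := (b == pa) && (w == pw).
Definition Kc : R := (\sum_b \sum_w `|c b w|) / `|c pa pw|.
Definition rr : R := Kc / N.
Definition zz (g : {ffun A -> {ffun Om -> 'I_n.+1}}) : R :=
  - (\sum_b \sum_w (if isp b w then 0 else c b w * ((g b w)%:R / N))) / c pa pw.
Definition hlo (g : {ffun A -> {ffun Om -> 'I_n.+1}}) b w : R :=
  if isp b w then zz g - rr + 2 * rr * ((g b w)%:R / N) else (g b w)%:R / N.
Definition hhi (g : {ffun A -> {ffun Om -> 'I_n.+1}}) b w : R :=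
  if isp b w then zz g - rr + 2 * rr * ((g b w).+1%:R / N) else (g b w).+1%:R / N.

Lemma split_isp (F : A -> Om -> R) :
  \sum_b \sum_w F b w = F pa pw + \sum_b \sum_w (if isp b w then 0 else F b w).
Proof.
have -> : \sum_b \sum_w F b w = \sum_b \sum_w ((b == pa)%:R * ((w == pw)%:R * F b w)
     + (if isp b w then 0 else F b w)).
  apply: eq_bigr => b _; apply: eq_bigr => w _; rewrite /isp.
  by case: (b == pa); case: (w == pw); rewrite /= ?mul1r ?mul0r ?add0r ?addr0.
rewrite (eq_bigr (fun b => \sum_w (b == pa)%:R * ((w == pw)%:R * F b w) +
     \sum_w (if isp b w then 0 else F b w))); last by move=> b _; rewrite big_split.
rewrite big_split /=; congr (_ + _).
rewrite (eq_bigr (fun b => (b == pa)%:R * \sum_w (w == pw)%:R * F b w)); last first.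
  by move=> b _; rewrite mulr_sumr.
by rewrite (sum_ind pa (fun b => \sum_w (w == pw)%:R * F b w)) sum_ind.
Qed.

Lemma Kc_ge1 : 1 <= Kc.
Proof.
have hp : 0 < `|c pa pw| by rewrite normr_gt0.
rewrite /Kc ler_pdivlMr // mul1r (split_isp (fun b w => `|c b w|)) lerDl.
apply: sumr_ge0 => b _; apply: sumr_ge0 => w _; case: (isp b w) => //.
Qed.

Lemma rr_gt0 : 0 < rr.
Proof. rewrite /rr divr_gt0 ?N_gt0 //; exact: lt_le_trans ltr01 Kc_ge1. Qed.

Lemma hlo_hhi g b w : hlo g b w <= hhi g b w.
Proof.
have hN := N_gt0; have hr := rr_gt0.
rewrite /hlo /hhi; case: (isp b w).
  rewrite lerD2l; apply: ler_wpM2l; first by apply: mulr_ge0 => //; exact: ltW.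
  by rewrite ler_pM2r ?invr_gt0 // ler_nat.
by rewrite ler_pM2r ?invr_gt0 // ler_nat.
Qed.

Lemma hvol g : box_vol (hlo g) (hhi g) = (N^-1 ^+ #|Om|) ^+ #|A| * (2 * rr).
Proof.
rewrite /box_vol.
have -> : \prod_b \prod_w (hhi g b w - hlo g b w) =
          \prod_b \prod_w (N^-1 * (if isp b w then 2 * rr else 1)).
  apply: eq_bigr => b _; apply: eq_bigr => w _; rewrite /hhi /hlo.
  have hN : N != 0 by rewrite gt_eqF // N_gt0.
  case: (isp b w); rewrite -?natr1 /=; field; by rewrite nat1r pnatr_eq0.
under eq_bigr => b _ do rewrite big_split.
rewrite big_split /= !prodr_const; congr (_ * _).
rewrite (bigD1 pa) //= (bigD1 pw) //= /isp !eqxx /= big1 ?mulr1; last first.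
  by move=> w /negbTE ->.
rewrite big1 ?mulr1 // => b /negbTE hb; apply: big1 => w _; by rewrite hb.
Qed.

Lemma hvol_sum : \sum_(g : {ffun A -> {ffun Om -> 'I_n.+1}}) box_vol (hlo g) (hhi g) = 2 * rr.
Proof.
rewrite (eq_bigr (fun _ => (N^-1 ^+ #|Om|) ^+ #|A| * (2 * rr))); last by move=> g _; exact: hvol.
have hcard : #|{ffun A -> {ffun Om -> 'I_n.+1}}| = (((n.+1) ^ #|Om|) ^ #|A|)%N.
  by rewrite !card_ffun card_ord.
have e : forall (x : R) k, x *+ k = k%:R * x by move=> x k; rewrite mulr_natl.
rewrite sumr_const hcard e natrX natrX.
rewrite mulrA -!exprMn /N mulfV ?expr1n ?mul1r // pnatr_eq0.
by [].
Qed.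

Lemma hcover (u : A -> Om -> R) : (forall a w, 0 <= u a w <= 1) ->
  \sum_b \sum_w c b w * u b w = 0 ->
  exists g, forall b w, hlo g b w <= u b w <= hhi g b w.
Proof.
move=> hu hL.
have hN := N_gt0; have hr := rr_gt0.
have hNn : N != 0 by rewrite gt_eqF.
have hcp : `|c pa pw| > 0 by rewrite normr_gt0.
pose g0 : {ffun A -> {ffun Om -> 'I_n.+1}} := [ffun b => [ffun w => cell n (u b w)]].
pose z0 := zz g0.
pose tp := (u pa pw - z0 + rr) / (2 * rr).
pose g : {ffun A -> {ffun Om -> 'I_n.+1}} :=
  [ffun b => [ffun w => if isp b w then cell n tp else cell n (u b w)]].
have hz : zz g = z0.
  rewrite /z0 /zz; congr (- _ / _); apply: eq_bigr => b _; apply: eq_bigr => w _.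
  rewrite /g /g0 !ffunE; by case: (isp b w).
have hg0 : forall b w, (g0 b w)%:R / N <= u b w <= (g0 b w).+1%:R / N.
  move=> b w; rewrite /g0 !ffunE; exact: cell_bounds.
pose S1 := \sum_b \sum_w (if isp b w then 0 else c b w * u b w).
pose S2 := \sum_b \sum_w (if isp b w then 0 else c b w * ((g0 b w)%:R / N)).
pose D := \sum_b \sum_w (if isp b w then 0 else c b w * (u b w - (g0 b w)%:R / N)).
have hD : D = S1 - S2.
  rewrite /D /S1 /S2 -sumrB; apply: eq_bigr => b _; rewrite -sumrB.
  apply: eq_bigr => w _; case: (isp b w); rewrite ?subrr //; ring.
have hup : u pa pw = - S1 / c pa pw.
  move: hL; rewrite (split_isp (fun b w => c b w * u b w)) -/S1 => h.
  have e : c pa pw * u pa pw = - S1 by lra.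
  by rewrite -e mulrAC divff // mul1r.
have hz0 : z0 = - S2 / c pa pw by [].
have hdiff : u pa pw - z0 = - D / c pa pw.
  rewrite hup hz0 hD; rewrite !mulNr; ring.
have hDb : `|D| <= (\sum_b \sum_w `|c b w|) / N.
  apply: (le_trans (ler_norm_sum _ _ _)); rewrite mulr_suml; apply: ler_sum => b _.
  apply: (le_trans (ler_norm_sum _ _ _)); rewrite mulr_suml; apply: ler_sum => w _.
  case: (isp b w).
    by rewrite normr0 divr_ge0 // ltW.
  rewrite normrM.
  have /andP [h1 h2] := hg0 b w.
  have h3 : 0 <= u b w - (g0 b w)%:R / N by rewrite subr_ge0.
  have hd : `|u b w - (g0 b w)%:R / N| <= N^-1.
    rewrite ger0_norm //; move: h2; rewrite -natr1 mulrDl mul1r; move=> h; rewrite ?lerBlDr ?lerBlDl; by rewrite addrC.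
  exact: (le_trans (ler_wpM2l (normr_ge0 _) hd)).
have hbound : `|u pa pw - z0| <= rr.
  rewrite hdiff normrM normrN normfV.
  have hi : 0 <= `|c pa pw|^-1 by rewrite invr_ge0 normr_ge0.
  apply: le_trans (ler_wpM2r hi hDb) _.
  by rewrite /rr /Kc mulrAC.
have tp01 : 0 <= tp <= 1.
  move: hbound; rewrite ler_norml => /andP [b1 b2].
  have h2 : 0 < 2 * rr by rewrite mulr_gt0.
  apply/andP; split; rewrite /tp.
    by apply: divr_ge0; [lra | exact: ltW].
  by rewrite ler_pdivrMr // mul1r; lra.
have htp : u pa pw = z0 - rr + 2 * rr * tp.
  rewrite /tp mulrC divfK; first ring.
  by rewrite gt_eqF // mulr_gt0.
exists g => b w; rewrite /hlo /hhi hz.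
case hi: (isp b w); last first.
  by rewrite /g !ffunE hi; apply: cell_bounds; exact: hu.
move/andP: hi => [/eqP eb /eqP ew]; subst b w.
rewrite /g !ffunE /isp !eqxx /=.
have /andP [c1 c2] := cell_bounds n tp01.
rewrite htp !lerD2l; apply/andP; split; apply: ler_wpM2l => //;
  apply: mulr_ge0 => //; exact: ltW.
Qed.

End Hyper.

Section Null.
Variables (R : realType) (A Om : finType) (a0 : A) (w0 : Om).

Lemma vol0 : box_vol (fun _ _ => 0 : R) (fun (_ : A) (_ : Om) => 0 : R) = 0.
Proof. by rewrite /box_vol (bigD1 a0) //= (bigD1 w0) //= subrr !mul0r. Qed.

Lemma vol_ge0 (lo hi : A -> Om -> R) : (forall a w, lo a w <= hi a w) ->
  0 <= box_vol lo hi.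
Proof.
move=> h; apply: prodr_ge0 => a _; apply: prodr_ge0 => w _; by rewrite subr_ge0.
Qed.

Lemma sum_trunc (F : nat -> R) K n : (forall k, 0 <= F k) ->
  (forall k, (K <= k)%N -> F k = 0) ->
  \sum_(k < n) F k <= \sum_(k < K) F k.
Proof.
move=> h0 hK; rewrite -!(big_mkord xpredT F).
case: (leqP n K) => hn.
  rewrite (big_cat_nat (leq0n n) hn) /= lerDl; apply: sumr_ge0 => k _; exact: h0.
rewrite (big_cat_nat (leq0n K) (ltnW hn)) /= [X in _ + X]big1_seq ?addr0 //.
move=> k /andP [_]; rewrite mem_index_iota => /andP [hk _]; exact: hK.
Qed.

Lemma fin_null (N : set (A -> Om -> R)) :
  (forall eps : R, 0 < eps -> exists (T : finType) (lo hi : T -> A -> Om -> R),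
    [/\ (forall t a w, lo t a w <= hi t a w),
        (forall u, N u -> exists t, forall a w, lo t a w <= u a w <= hi t a w) &
        \sum_t box_vol (lo t) (hi t) <= eps]) ->
  lebesgue_null N.
Proof.
move=> H eps he; have [T [lo [hi [hle hcov hsum]]]] := H eps he.
case: (pickP (@predT T)) => [t0 _ | hT]; last first.
  exists (fun _ _ _ => 0), (fun _ _ _ => 0); split => //; split.
    by move=> u /hcov [t _]; move: (hT t).
  by move=> n; rewrite big1 ?ltW // => k _; exact: vol0.
pose e := index_enum T; pose K := size e.
pose lo' k := if (k < K)%N then lo (nth t0 e k) else (fun _ _ => 0).
pose hi' k := if (k < K)%N then hi (nth t0 e k) else (fun _ _ => 0).
exists lo', hi'; split.
  by move=> k a w; rewrite /lo' /hi'; case: (k < K)%N.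
split.
  move=> u /hcov [t ht]; exists (index t e) => //.
  have hk : (index t e < K)%N by rewrite /K index_mem mem_index_enum.
  by rewrite /= /lo' /hi' hk nth_index ?mem_index_enum.
move=> n.
have h1 : forall k, 0 <= box_vol (lo' k) (hi' k).
  move=> k; apply: vol_ge0 => a w; rewrite /lo' /hi'; by case: (k < K)%N.
have h2 : forall k, (K <= k)%N -> box_vol (lo' k) (hi' k) = 0.
  move=> k hk; rewrite /lo' /hi' ltnNge hk /=; exact: vol0.
apply: le_trans (sum_trunc n h1 h2) _.
apply: le_trans hsum.
rewrite -(big_mkord xpredT (fun k => box_vol (lo' k) (hi' k))).
rewrite (big_nth t0 xpredT (fun t => box_vol (lo t) (hi t))).
rewrite le_eqVlt; apply/orP; left; apply/eqP.
by apply: eq_big_nat => i /andP [_ hik]; rewrite /lo' /hi' hik.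
Qed.

End Null.

Definition genR (R : realType) (A Om : finType) (mu0 : Om -> R) (u : A -> Om -> R) :=
  forall (P : {set Om}), (0 < #|P|)%N -> forall a a', a != a' ->
  \sum_(w in P) mu0 w * (u a w - u a' w) != 0.

Section NullGen.
Variables (R : realType) (A Om : finType) (mu0 : Om -> R) (a0 : A) (w0 : Om).
Hypothesis mu_pos : forall w, 0 < mu0 w.

Definition II := ({set Om} * A * A)%type.
Definition valid (i : II) := (0 < #|i.1.1|)%N && (i.1.2 != i.2).
Definition cI (i : II) (b : A) (w : Om) : R :=
  (w \in i.1.1)%:R * mu0 w * ((b == i.1.2)%:R - (b == i.2)%:R).
Definition wI (i : II) : Om := odflt w0 [pick w in i.1.1].

Lemma cI_sum i (u : A -> Om -> R) :
  \sum_b \sum_w cI i b w * u b w = \sum_(w in i.1.1) mu0 w * (u i.1.2 w - u i.2 w).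
Proof.
rewrite exchange_big /= [RHS]big_mkcond /=; apply: eq_bigr => w _.
have -> : \sum_b cI i b w * u b w =
   \sum_b ((b == i.1.2)%:R * ((w \in i.1.1)%:R * mu0 w * u b w) -
           (b == i.2)%:R * ((w \in i.1.1)%:R * mu0 w * u b w)).
  by apply: eq_bigr => b _; rewrite /cI; ring.
rewrite sumrB !sum_ind; case: (w \in i.1.1); rewrite /=; ring.
Qed.

Lemma wI_in i : valid i -> wI i \in i.1.1.
Proof.
move=> /andP [hc _]; rewrite /wI; case: pickP => [x hx|hn] //=.
by move/card_gt0P: hc => [x hx]; move: (hn x); rewrite hx.
Qed.

Lemma cI_pin i : valid i -> cI i i.1.2 (wI i) != 0.
Proof.
move=> hv; have := hv; move=> /andP [_ hne].
rewrite /cI wI_in // eqxx eq_sym (negbTE hne) /= subr0 mulr1 mul1r.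
by rewrite eq_sym; apply: lt0r_neq0.
Qed.

Lemma Kc_ge0 c pa pw : 0 <= @Kc R A Om c pa pw.
Proof.
rewrite /Kc; apply: divr_ge0; last exact: normr_ge0.
by apply: sumr_ge0 => b _; apply: sumr_ge0 => w _.
Qed.

Lemma null_main :
  lebesgue_null (@unit_cube R A Om `\` [set u | unit_cube u /\ genR mu0 u]).
Proof.
apply: (fin_null a0 w0) => eps he.
pose Kt := \sum_(i : II) (if valid i then @Kc R A Om (cI i) i.1.2 (wI i) else 0).
have hKt : 0 <= Kt.
  apply: sumr_ge0 => i _; case: (valid i) => //; exact: Kc_ge0.
pose n := Num.truncn (2 * Kt / eps).
pose lo (t : (II * {ffun A -> {ffun Om -> 'I_n.+1}})%type) :=
  if valid t.1 then @hlo R A Om (cI t.1) t.1.1.2 (wI t.1) n t.2 else (fun _ _ => 0).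
pose hi (t : (II * {ffun A -> {ffun Om -> 'I_n.+1}})%type) :=
  if valid t.1 then @hhi R A Om (cI t.1) t.1.1.2 (wI t.1) n t.2 else (fun _ _ => 0).
exists (II * {ffun A -> {ffun Om -> 'I_n.+1}})%type, lo, hi; split.
- move=> [i g] a w; rewrite /lo /hi /=.
  case hv: (valid i); last by [].
  exact: (hlo_hhi (cI_pin hv) g a w).
- move=> u [hcube hnS].
  have [[i [hv hL]] | hn] := pselect (exists i, valid i /\
       \sum_b \sum_w cI i b w * u b w = 0).
    have [g hg] := hcover (cI_pin hv) n hcube hL.
    by exists (i, g); rewrite /lo /hi /= hv.
  exfalso; apply: hnS; split => // P hP a a' ne; apply/eqP => h0; apply: hn.
  exists (P, a, a'); split; first by rewrite /valid /= hP ne.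
  by rewrite cI_sum.
- rewrite -(pair_bigA _ (fun i g => box_vol (lo (i, g)) (hi (i, g)))) /=.
  have -> : \sum_i \sum_g box_vol (lo (i, g)) (hi (i, g)) =
            \sum_i (if valid i then 2 * (@Kc R A Om (cI i) i.1.2 (wI i) / n.+1%:R) else 0).
    apply: eq_bigr => i _; rewrite /lo /hi /=; case: (valid i).
      by rewrite hvol_sum.
    by rewrite big1 // => g _; exact: vol0.
  have -> : \sum_i (if valid i then 2 * (@Kc R A Om (cI i) i.1.2 (wI i) / n.+1%:R) else 0)
           = 2 * Kt / n.+1%:R.
    rewrite /Kt mulr_sumr mulr_suml; apply: eq_bigr => i _; case: (valid i).
      by rewrite mulrA.
    by rewrite mulr0 mul0r.
  have hN : (0 : R) < n.+1%:R by rewrite ltr0n.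
  rewrite ler_pdivrMr // [eps * _]mulrC -ler_pdivrMr //.
  have := Num.Theory.truncnS_gt (2 * Kt / eps); rewrite -/n => h.
  exact: ltW.
Qed.

End NullGen.

Theorem theorem6 (R : realType) (A Om M : finType)
  (mu0 : Om -> R) (uS : A -> Om -> R) :
  (0 < #|A|)%N -> (0 < #|Om|)%N ->
  is_dist mu0 -> (forall w, 0 < mu0 w) ->
  (maxn #|Om| #|A| < #|M|)%N ->
  strictly_supermodular uS ->
  exists S : set (A -> Om -> R),
    full_measure_in_cube S /\
    forall uR, S uR ->
      values_committing M mu0 uS uR -> values_randomization M mu0 uS uR.
Proof.
move=> hA hO [_ hsum] hpos hM [ltA [ltO [toA [toO sm]]]].
have [a0 _] := card_gt0P hA.
have [w0 _] := card_gt0P hO.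
have [m0 _] := card_gt0P (leq_ltn_trans (leq0n _) hM).
exists [set u | unit_cube u /\ genR mu0 u]; split.
  split; first by move=> u [].
  exact: null_main a0 w0 hpos.
move=> uR [hcube hgen].
exact: (part2 hpos hsum a0 w0 hcube hgen m0 toA toO sm).
Qed.
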